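(* For a positive integer $d$, a vector $y\in\mathbb{R}^d$ and a positive integer $q$, let $$\mathbf{R}_q(y) = \mathbf{E}\Big(\sum_{i\neq j} y_i y_j r_i r_j\Big)^q,$$ where $r_1,\ldots,r_d$ are independent Rademacher random variables (each $\pm1$ with probability $1/2$) and the sum runs over ordered pairs $(i,j)$, $i\ne j$, in $\{1,\ldots,d\}$. Let $x\in\mathbb{R}^n$ be nonzero, let $K=\|x\|_0$ be its number of nonzero coordinates, and let $$x^* = \Big(\tfrac{\|x\|_2}{\sqrt{K}},\ldots,\tfrac{\|x\|_2}{\sqrt{K}}\Big)\in\mathbb{R}^K.$$ Then for every positive integer $q$, $$\mathbf{R}_q(x)\le \mathbf{R}_q(x^* ),$$ and moreover $$\mathbf{R}_q(x^* ) = \|x\|_2^{2q}\,\mathbf{E}\big(\bar B^2-1\big)^q,$$ where $\bar B = \frac{B-K/2}{\sqrt{K/4}}$ and $B\sim\mathsf{Binom}(K,1/2)$. *)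

(* Defs.v *)
From HB Require Import structures.
From mathcomp Require Import all_boot all_order all_algebra.
From mathcomp Require Import reals.
Set Implicit Arguments. Unset Strict Implicit. Unset Printing Implicit Defensive.
Import Order.TTheory GRing.Theory Num.Theory.
Local Open Scope ring_scope.

Definition rsign (R : realType) (b : bool) : R := if b then 1 else -1.

(* Expectation over d independent Rademacher variables: uniform average over
   all 2^d sign patterns. *)
Definition rad_E (R : realType) (d : nat) (f : {ffun 'I_d -> bool} -> R) : R :=
  (2 ^+ d)^-1 * \sum_(s : {ffun 'I_d -> bool}) f s.

Definition Rq (R : realType) (d : nat) (y : 'rV[R]_d) (q : nat) : R :=
  rad_E (fun s : {ffun 'I_d -> bool} =>
    (\sum_(i < d) \sum_(j < d | i != j)
        y 0 i * y 0 j * rsign R (s i) * rsign R (s j)) ^+ q).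

Definition l0norm (R : realType) (n : nat) (x : 'rV[R]_n) : nat :=
  #|[set i : 'I_n | x 0 i != 0]|.

Definition l2norm (R : realType) (n : nat) (x : 'rV[R]_n) : R :=
  Num.sqrt (\sum_(i < n) x 0 i ^+ 2).

Definition xstar (R : realType) (n : nat) (x : 'rV[R]_n) : 'rV[R]_(l0norm x) :=
  const_mx (l2norm x / Num.sqrt (l0norm x)%:R).

Definition binomE (R : realType) (K : nat) (f : nat -> R) : R :=
  \sum_(k < K.+1) ('C(K, k))%:R / 2 ^+ K * f k.

Definition Bbar (R : realType) (K k : nat) : R :=
  (k%:R - K%:R / 2) / Num.sqrt (K%:R / 4).

(* Main.v *)
Require Import Defs.
From HB Require Import structures.
From mathcomp Require Import all_boot all_order all_algebra.
From mathcomp Require Import reals.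
From mathcomp Require Import ring lra.
Import Order.TTheory GRing.Theory Num.Theory.
Local Open Scope ring_scope.
Set Implicit Arguments. Unset Strict Implicit.



Section Pos.
Variable R : realType.
Variable n : nat.
Local Notation SP := {ffun 'I_n -> bool}.

Definition mono (e : 'I_n -> nat) (s : SP) : R := \prod_k rsign R (s k) ^+ e k.

Definition posp (F : SP -> R) := exists L : seq (R * ('I_n -> nat)),
  forall s, F s = \sum_(x <- L) x.1 ^+ 2 * mono x.2 s.

Lemma posp_ext F G : posp F -> (forall s, G s = F s) -> posp G.
Proof. by move=> [L HL] E; exists L => s; rewrite E HL. Qed.

Lemma posp_add F G : posp F -> posp G -> posp (fun s => F s + G s).
Proof. by move=> [L1 H1] [L2 H2]; exists (L1 ++ L2) => s; rewrite big_cat /= H1 H2. Qed.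

Lemma mono_mul e1 e2 s : mono e1 s * mono e2 s = mono (fun k => (e1 k + e2 k)%N) s.
Proof. by rewrite /mono -big_split /=; apply: eq_bigr => k _; rewrite exprD. Qed.

Lemma posp_mul F G : posp F -> posp G -> posp (fun s => F s * G s).
Proof.
move=> [L1 H1] [L2 H2].
exists [seq (x.1 * y.1, fun k => (x.2 k + y.2 k)%N) | x <- L1, y <- L2] => s.
rewrite H1 H2 big_allpairs_dep /= mulr_suml; apply: eq_bigr => x _.
rewrite mulr_sumr; apply: eq_bigr => y _ /=.
by rewrite -mono_mul exprMn mulrACA.
Qed.

Lemma posp_cst c : 0 <= c -> posp (fun _ => c).
Proof.
move=> c0; exists [:: (Num.sqrt c, fun _ => 0%N)] => s.
by rewrite big_seq1 /= sqr_sqrtr // /mono big1 ?mulr1 // => k _; rewrite expr0.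
Qed.

Lemma posp_sg k : posp (fun s => rsign R (s k)).
Proof.
exists [:: (1, fun l => (l == k : nat))] => s.
rewrite big_seq1 /= expr1n mul1r /mono (bigD1 k) //= eqxx expr1 big1 ?mulr1 //.
by move=> l /negbTE ->; rewrite expr0.
Qed.

Lemma posp_big (I : Type) (r : seq I) (P : pred I) (F : I -> SP -> R) :
  (forall i, P i -> posp (F i)) -> posp (fun s => \sum_(i <- r | P i) F i s).
Proof.
move=> H; elim: r => [|i r IH].
  by apply: posp_ext (posp_cst (lexx 0)) _ => s; rewrite big_nil.
case Pi: (P i).
  apply: posp_ext (posp_add (H i Pi) IH) _ => s; by rewrite big_cons Pi.
by apply: posp_ext IH _ => s; rewrite big_cons Pi.
Qed.

Lemma posp_exp F m : posp F -> posp (fun s => F s ^+ m).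
Proof.
move=> HF; elim: m => [|m IH].
  by apply: posp_ext (posp_cst ler01) _ => s; rewrite expr0.
by apply: posp_ext (posp_mul HF IH) _ => s; rewrite exprS.
Qed.

Lemma sum_mono_ge0 e : 0 <= \sum_(s : SP) mono e s.
Proof.
rewrite /mono.
have -> : \sum_(s : SP) \prod_k rsign R (s k) ^+ e k =
          \prod_(k : 'I_n) \sum_(b : bool) rsign R b ^+ e k.
  by rewrite (bigA_distr_bigA (fun k (b : bool) => rsign R b ^+ e k)).
apply: prodr_ge0 => k _; rewrite /rsign big_bool /= expr1n.
rewrite -signr_odd; case: (odd (e k)) => /=; rewrite ?expr0 ?expr1; first by rewrite subrr.
by rewrite addr_ge0.
Qed.

Lemma posp_sum_ge0 F : posp F -> 0 <= \sum_(s : SP) F s.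
Proof.
move=> [L HL]; under eq_bigr do rewrite HL.
rewrite exchange_big /=; apply: sumr_ge0 => x _.
by rewrite -mulr_sumr; apply: mulr_ge0; [apply: sqr_ge0 | apply: sum_mono_ge0].
Qed.

End Pos.



Section B.
Variable R : realType.
Variable n : nat.
Local Notation SP := {ffun 'I_n -> bool}.
Local Notation sg b := (rsign R b).

Definition Zf (y : 'I_n -> R) (s : SP) := \sum_k y k * sg (s k).
Definition Tf (y : 'I_n -> R) := \sum_k y k ^+ 2.
Definition Gf (y : 'I_n -> R) q := \sum_(s : SP) (Zf y s ^+ 2 - Tf y) ^+ q.

Lemma sg_sqr b : sg b ^+ 2 = 1.
Proof. by case: b; rewrite /rsign ?expr1n ?sqrrN ?expr1n. Qed.

Lemma sgN b : sg (~~ b) = - sg b.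
Proof. by case: b; rewrite /rsign /= ?opprK. Qed.

Lemma offdiag (P : pred 'I_n) (y : 'I_n -> R) (s : SP) :
  (\sum_(k | P k) y k * sg (s k)) ^+ 2 - \sum_(k | P k) y k ^+ 2 =
  \sum_(i | P i) \sum_(j | P j && (i != j)) y i * y j * sg (s i) * sg (s j).
Proof.
rewrite expr2 mulr_suml -sumrB; apply: eq_bigr => i Pi.
rewrite mulr_sumr (bigD1 i) //=.
have -> : y i * sg (s i) * (y i * sg (s i)) = y i ^+ 2 by rewrite mulrACA -!expr2 sg_sqr mulr1.
rewrite addrC addrK; apply: eq_big => [j|j _]; first by rewrite eq_sym.
by rewrite mulrACA mulrA.
Qed.

Lemma Rq_G (x : 'rV[R]_n) q : Rq x q = (2 ^+ n)^-1 * Gf (fun k => x 0 k) q.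
Proof.
rewrite /Rq /rad_E /Gf; congr (_ * _); apply: eq_bigr => s _; congr (_ ^+ _).
rewrite /Zf /Tf (offdiag xpredT); apply: eq_bigr => i _; apply: eq_bigl => j.
by [].
Qed.

Definition flipm (m : 'I_n -> bool) (s : SP) : SP := [ffun k => if m k then ~~ s k else s k].

Lemma flipmK m : involutive (flipm m).
Proof. by move=> s; apply/ffunP => k; rewrite !ffunE; case: (m k); rewrite ?negbK. Qed.

Lemma Gf_abs (y : 'I_n -> R) q : Gf y q = Gf (fun k => `|y k|) q.
Proof.
rewrite /Gf (reindex_inj (inv_inj (flipmK (fun k => y k < 0)))) /=.
have -> : Tf (fun k => `|y k|) = Tf y.
  by apply: eq_bigr => k _; rewrite real_normK ?num_real.
apply: eq_bigr => s _; congr ((_ ^+ 2 - _) ^+ _); apply: eq_bigr => k _.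
rewrite ffunE; case: ltrP => hy; last by rewrite ger0_norm.
by rewrite sgN ltr0_norm // mulrN mulNr.
Qed.

End B.



Section C.
Variable R : realType.

Lemma phi_mono (t t' : R) m : 0 <= t -> t <= t' ->
  t ^+ m + (- t) ^+ m <= t' ^+ m + (- t') ^+ m.
Proof.
move=> t0 tt'; rewrite (exprNn t) (exprNn t') -signr_odd; case: (odd m); rewrite ?expr1 ?expr0.
  by rewrite !mulN1r !subrr.
rewrite !mul1r lerD // lerXn2r // nnegrE //; exact: le_trans tt'.
Qed.

Lemma psi_mono (s t t' : R) k l : 0 <= s -> 0 <= t -> t <= t' ->
  (s + t) ^+ k * t ^+ l + (s - t) ^+ k * (- t) ^+ l <=
  (s + t') ^+ k * t' ^+ l + (s - t') ^+ k * (- t') ^+ l.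
Proof.
move=> s0 t0 tt'.
have E u : (s + u) ^+ k * u ^+ l + (s - u) ^+ k * (- u) ^+ l =
   \sum_(i < k.+1) (s ^+ (k - i) *+ 'C(k, i)) * (u ^+ (i + l) + (- u) ^+ (i + l)).
  rewrite !exprDn !mulr_suml -big_split /=; apply: eq_bigr => i _.
  rewrite (exprD u) (exprD (- u)); ring.
rewrite !E; apply: ler_sum => i _; apply: ler_wpM2l.
  by apply: mulrn_wge0; apply: exprn_ge0.
exact: phi_mono.
Qed.

Definition gam j l (a b : R) :=
  (2 * (a + b)) ^+ j * (2 * a * b) ^+ l + (2 * (a - b)) ^+ j * (- (2 * a * b)) ^+ l
  + (- (2 * (a - b))) ^+ j * (- (2 * a * b)) ^+ l + (- (2 * (a + b))) ^+ j * (2 * a * b) ^+ l.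

Lemma gam_eq j l (a b : R) : gam j l a b = (1 + (-1) ^+ j) *
  ((2 * (a + b)) ^+ j * (2 * a * b) ^+ l + (2 * (a - b)) ^+ j * (- (2 * a * b)) ^+ l).
Proof. by rewrite /gam (exprNn (2 * (a + b))) (exprNn (2 * (a - b))); ring. Qed.

Lemma gam_even k l (a b : R) : gam (k.*2) l a b = 2 * 4 ^+ k *
  ((a ^+ 2 + b ^+ 2 + 2 * a * b) ^+ k * (2 * a * b) ^+ l +
   (a ^+ 2 + b ^+ 2 - 2 * a * b) ^+ k * (- (2 * a * b)) ^+ l).
Proof.
rewrite gam_eq -muln2 mulnC !exprM sqrrN expr1n.
have -> : (2 * (a + b)) ^+ 2 = 4 * (a ^+ 2 + b ^+ 2 + 2 * a * b) by ring.
have -> : (2 * (a - b)) ^+ 2 = 4 * (a ^+ 2 + b ^+ 2 - 2 * a * b) by ring.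
rewrite !exprMn expr1n; ring.
Qed.

Lemma gam_mono j l (a b a' b' : R) :
  a ^+ 2 + b ^+ 2 = a' ^+ 2 + b' ^+ 2 -> 0 <= a * b -> a * b <= a' * b' ->
  gam j l a b <= gam j l a' b'.
Proof.
move=> hs hab hab'.
case Ho: (odd j).
  by rewrite !gam_eq -signr_odd Ho expr1 subrr !mul0r.
have := odd_double_half j; rewrite Ho add0n => <-.
rewrite !gam_even hs; apply: ler_wpM2l.
  by apply: mulr_ge0 => //; apply: exprn_ge0.
apply: psi_mono; first by rewrite addr_ge0 // sqr_ge0.
  by rewrite -mulrA mulr_ge0.
by rewrite -!mulrA ler_wpM2l.
Qed.

End C.



Section D.
Variable R : realType.
Variable n : nat.
Local Notation SP := {ffun 'I_n -> bool}.
Local Notation sg b := (rsign R b).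

Lemma expand3 (c d w v : R) q : (c + d * w + v) ^+ q =
  \sum_(j < q.+1) \sum_(l < (q - j).+1)
     ('C(q, j) * 'C(q - j, l))%:R * (d ^+ j * c ^+ l) * (w ^+ j * v ^+ (q - j - l)).
Proof.
have -> : c + d * w + v = (v + c) + d * w by ring.
rewrite exprDn; apply: eq_bigr => j _.
rewrite exprDn mulr_suml -sumrMnl; apply: eq_bigr => l _.
rewrite natrM exprMn; ring.
Qed.

Lemma orbit4 (i j : 'I_n) (hij : i != j) (H : bool -> bool -> SP -> R) :
  (forall b b' s, H b b' (flipm (fun k => k == i) s) = H b b' s) ->
  (forall b b' s, H b b' (flipm (fun k => k == j) s) = H b b' s) ->
  4 * \sum_(s : SP) H (s i) (s j) s =
  \sum_(s : SP) (H true true s + H true false s + H false true s + H false false s).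
Proof.
move=> Hi Hj.
set X := \sum_(s : SP) H (s i) (s j) s.
have fi s : flipm (fun k => k == i) s i = ~~ s i by rewrite ffunE eqxx.
have fi' s : flipm (fun k => k == i) s j = s j by rewrite ffunE eq_sym (negbTE hij).
have fj s : flipm (fun k => k == j) s j = ~~ s j by rewrite ffunE eqxx.
have fj' s : flipm (fun k => k == j) s i = s i by rewrite ffunE (negbTE hij).
have X1 : X = \sum_(s : SP) H (~~ s i) (s j) s.
  rewrite /X (reindex_inj (inv_inj (flipmK (fun k => k == i)))) /=.
  by apply: eq_bigr => s _; rewrite fi fi' Hi.
have X2 : X = \sum_(s : SP) H (s i) (~~ s j) s.
  rewrite /X (reindex_inj (inv_inj (flipmK (fun k => k == j)))) /=.
  by apply: eq_bigr => s _; rewrite fj fj' Hj.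
have X3 : X = \sum_(s : SP) H (~~ s i) (~~ s j) s.
  rewrite X2 (reindex_inj (inv_inj (flipmK (fun k => k == i)))) /=.
  by apply: eq_bigr => s _; rewrite fi fi' Hi.
have -> : 4 * X = X + X + X + X by ring.
rewrite {1}X1 {1}X2 {1}X3 /X -!big_split /=; apply: eq_bigr => s _.
by case: (s i); case: (s j) => /=; ring.
Qed.


Definition Wf (y : 'I_n -> R) (i j : 'I_n) (s : SP) :=
  \sum_(k | (k != i) && (k != j)) y k * sg (s k).
Definition Vf (y : 'I_n -> R) (i j : 'I_n) (s : SP) :=
  \sum_(k | (k != i) && (k != j)) \sum_(l | ((l != i) && (l != j)) && (k != l))
     y k * y l * sg (s k) * sg (s l).

Lemma decomp (y : 'I_n -> R) (i j : 'I_n) s : i != j ->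
  Zf y s ^+ 2 - Tf y = 2 * y i * y j * sg (s i) * sg (s j)
    + 2 * (y i * sg (s i) + y j * sg (s j)) * Wf y i j s + Vf y i j s.
Proof.
move=> hij.
have hZ : Zf y s = y i * sg (s i) + y j * sg (s j) + Wf y i j s.
  rewrite /Zf (bigD1 i) //= (bigD1 j) /=; last by rewrite eq_sym.
  by rewrite addrA.
have hT : Tf y = y i ^+ 2 + y j ^+ 2 + \sum_(k | (k != i) && (k != j)) y k ^+ 2.
  rewrite /Tf (bigD1 i) //= (bigD1 j) /=; last by rewrite eq_sym.
  by rewrite addrA.
rewrite /Vf -(offdiag (fun k => (k != i) && (k != j))) hZ hT /Wf.
by case: (s i); case: (s j); rewrite /rsign; ring.
Qed.

Lemma Wf_flip y i j m s : (forall k, (k != i) && (k != j) -> m k = false) ->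
  Wf y i j (flipm m s) = Wf y i j s.
Proof. by move=> hm; apply: eq_bigr => k hk; rewrite ffunE hm. Qed.

Lemma Vf_flip y i j m s : (forall k, (k != i) && (k != j) -> m k = false) ->
  Vf y i j (flipm m s) = Vf y i j s.
Proof.
move=> hm; apply: eq_bigr => k hk; apply: eq_bigr => l /andP [hl _].
by rewrite !ffunE !hm.
Qed.

Definition Qf q (a b w v : R) :=
  \sum_(j0 < q.+1) \sum_(l < (q - j0).+1)
     ('C(q, j0) * 'C(q - j0, l))%:R * gam j0 l a b * (w ^+ j0 * v ^+ (q - j0 - l)).

Lemma G4 (y : 'I_n -> R) (i j : 'I_n) q : i != j ->
  4 * Gf y q = \sum_(s : SP) Qf q (y i) (y j) (Wf y i j s) (Vf y i j s).
Proof.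
move=> hij.
pose H b b' s := (2 * y i * y j * sg b * sg b'
    + 2 * (y i * sg b + y j * sg b') * Wf y i j s + Vf y i j s) ^+ q.
have -> : Gf y q = \sum_(s : SP) H (s i) (s j) s.
  by apply: eq_bigr => s _; rewrite (decomp _ _ hij).
rewrite (@orbit4 i j hij H); first last.
- by move=> b b' s; rewrite /H Wf_flip ?Vf_flip // => k /andP [ki kj]; apply/negbTE.
- by move=> b b' s; rewrite /H Wf_flip ?Vf_flip // => k /andP [ki kj]; apply/negbTE.
apply: eq_bigr => s _; rewrite /H /Qf.
set a := y i; set b := y j; set w := Wf y i j s; set v := Vf y i j s.
have -> : 2 * a * b * sg true * sg true + 2 * (a * sg true + b * sg true) * w + v
   = 2 * a * b + 2 * (a + b) * w + v by rewrite /rsign; ring.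
have -> : 2 * a * b * sg true * sg false + 2 * (a * sg true + b * sg false) * w + v
   = - (2 * a * b) + 2 * (a - b) * w + v by rewrite /rsign; ring.
have -> : 2 * a * b * sg false * sg true + 2 * (a * sg false + b * sg true) * w + v
   = - (2 * a * b) + - (2 * (a - b)) * w + v by rewrite /rsign; ring.
have -> : 2 * a * b * sg false * sg false + 2 * (a * sg false + b * sg false) * w + v
   = 2 * a * b + - (2 * (a + b)) * w + v by rewrite /rsign; ring.
rewrite !expand3 -!big_split; apply: eq_bigr => j0 _.
rewrite -!big_split; apply: eq_bigr => l _ /=.
rewrite /gam; ring.
Qed.

Lemma pair_le (y y' : 'I_n -> R) (i j : 'I_n) q : i != j ->
  (forall k, 0 <= y k) ->
  (forall k, k != i -> k != j -> y' k = y k) ->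
  y' i ^+ 2 + y' j ^+ 2 = y i ^+ 2 + y j ^+ 2 ->
  0 <= y i * y j -> y i * y j <= y' i * y' j ->
  Gf y q <= Gf y' q.
Proof.
move=> hij y0 hyy hs hab hab'.
rewrite -(@ler_pM2l _ 4) // !(G4 _ _ hij).
have hW s : Wf y' i j s = Wf y i j s.
  by apply: eq_bigr => k /andP [ki kj]; rewrite hyy.
have hV s : Vf y' i j s = Vf y i j s.
  apply: eq_bigr => k /andP [ki kj]; apply: eq_bigr => l /andP [/andP [li lj] _].
  by rewrite !hyy.
under [X in _ <= X]eq_bigr do rewrite hW hV.
rewrite -subr_ge0 -sumrB; apply: posp_sum_ge0.
have pW : posp (fun s => Wf y i j s).
  apply: posp_big => k _; apply: posp_mul; [exact: posp_cst | exact: posp_sg].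
have pV : posp (fun s => Vf y i j s).
  apply: posp_big => k _; apply: posp_big => l _.
  apply: posp_mul; last exact: posp_sg.
  apply: posp_mul; last exact: posp_sg.
  by apply: posp_cst; rewrite mulr_ge0.
pose F := fun s => \sum_(j0 < q.+1) \sum_(l < (q - j0).+1)
   (('C(q, j0) * 'C(q - j0, l))%:R * (gam j0 l (y' i) (y' j) - gam j0 l (y i) (y j)))
   * (Wf y i j s ^+ j0 * Vf y i j s ^+ (q - j0 - l)).
have pF : posp F.
  apply: posp_big => j0 _; apply: posp_big => l _; apply: posp_mul.
    apply: posp_cst; apply: mulr_ge0; first exact: ler0n.
    by rewrite subr_ge0; apply: gam_mono => //; rewrite hs.
  by apply: posp_mul; apply: posp_exp.
apply: (posp_ext pF).
move=> s /=; rewrite /Qf -sumrB; apply: eq_bigr => j0 _.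
rewrite -sumrB; apply: eq_bigr => l _; ring.
Qed.

End D.



Section E.
Variable R : realType.
Variable n : nat.
Local Notation SP := {ffun 'I_n -> bool}.
Local Notation sg b := (rsign R b).

Lemma Gf_ext (y y' : 'I_n -> R) q : (forall k, y k = y' k) -> Gf y q = Gf y' q.
Proof.
move=> h; rewrite /Gf /Tf /Zf; apply: eq_bigr => s _.
by congr ((_ ^+ 2 - _) ^+ _); apply: eq_bigr => k _; rewrite h.
Qed.

Lemma sign_split (A : {set 'I_n}) (d : 'I_n -> R) k0 :
  \sum_(k in A) d k = 0 -> k0 \in A -> d k0 != 0 ->
  (exists2 k, k \in A & d k < 0) /\ (exists2 k, k \in A & 0 < d k).
Proof.
move=> hs hk0 hd; split.
  case: (boolP [exists k in A, d k < 0]) => [/exists_inP [k ? ?]|/exists_inP hn].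
    by exists k.
  exfalso; move/eqP: hd; apply; apply: (psumr_eq0P _ hs) => // k kA.
  by rewrite leNgt; apply/negP => h; apply: hn; exists k.
case: (boolP [exists k in A, 0 < d k]) => [/exists_inP [k ? ?]|/exists_inP hn].
  by exists k.
exfalso; move/eqP: hd; apply; rewrite -[d k0]opprK; apply/eqP; rewrite oppr_eq0; apply/eqP.
have hs' : \sum_(k in A) - d k = 0 by rewrite sumrN hs oppr0.
apply: (psumr_eq0P _ hs') => // k kA.
by rewrite oppr_ge0 leNgt; apply/negP => h; apply: hn; exists k.
Qed.

Lemma Tf_supp (y : 'I_n -> R) (A : {set 'I_n}) :
  (forall k, (k \in A) = (y k != 0)) -> Tf y = \sum_(k in A) y k ^+ 2.
Proof.
move=> hA; rewrite /Tf [RHS]big_mkcond /=; apply: eq_bigr => k _.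
rewrite hA; case: eqP => // ->; by rewrite expr0n.
Qed.

Lemma eq_case (A : {set 'I_n}) (c : R) q (y : 'I_n -> R) :
  (forall k, 0 <= y k) -> (forall k, (k \in A) = (y k != 0)) ->
  #|[set k in A | y k ^+ 2 != c]| = 0%N ->
  Gf y q = Gf (fun k => if k \in A then Num.sqrt c else 0) q.
Proof.
move=> y0 hA /cards0_eq /setP h0; apply: Gf_ext => k.
case kA: (k \in A).
  have := h0 k; rewrite !inE kA /= => /negbFE /eqP <-.
  by rewrite sqrtr_sqr ger0_norm.
by move: kA; rewrite hA => /negbFE /eqP.
Qed.

Lemma smooth_ind (A : {set 'I_n}) (c : R) q m :
  (0 < #|A|)%N ->
  forall y : 'I_n -> R, (forall k, 0 <= y k) ->
  (forall k, (k \in A) = (y k != 0)) ->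
  Tf y = #|A|%:R * c ->
  (#|[set k in A | y k ^+ 2 != c]| <= m)%N ->
  Gf y q <= Gf (fun k => if k \in A then Num.sqrt c else 0) q.
Proof.
move=> A0; elim: m => [|m IH] y y0 hA hT hm.
  by move: hm; rewrite leqn0 => /eqP hm; rewrite (@eq_case A c q y y0 hA hm).
case: (posnP #|[set k in A | y k ^+ 2 != c]|) => [h0|hpos].
  by rewrite (@eq_case A c q y y0 hA h0).
have [k0 hk0] : exists k0, k0 \in [set k in A | y k ^+ 2 != c].
  by apply/set0Pn; rewrite -card_gt0.
move: hk0; rewrite inE => /andP [k0A hk0].
have hsum : \sum_(k in A) (y k ^+ 2 - c) = 0.
  by rewrite sumrB -(Tf_supp hA) hT sumr_const mulr_natl subrr.
have hk0' : y k0 ^+ 2 - c != 0 by rewrite subr_eq0.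
have [[i1 i1A hi1] [j1 j1A hj1]] := sign_split hsum k0A hk0'.
rewrite subr_lt0 in hi1; rewrite subr_gt0 in hj1.
have hij : i1 != j1.
  by apply/eqP => e; move: hi1; rewrite e => /(lt_trans hj1); rewrite ltxx.
have yi0 : 0 <= y i1 ^+ 2 by apply: sqr_ge0.
have c0 : 0 < c by apply: le_lt_trans hi1.
set e := y i1 ^+ 2 + y j1 ^+ 2 - c.
have e0 : y i1 ^+ 2 < e by rewrite /e -addrA ltrDl subr_gt0.
have e0' : 0 < e by apply: le_lt_trans e0.
pose y' k := if k == i1 then Num.sqrt c else if k == j1 then Num.sqrt e else y k.
have y'i : y' i1 = Num.sqrt c by rewrite /y' eqxx.
have y'j : y' j1 = Num.sqrt e by rewrite /y' eq_sym (negbTE hij) eqxx.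
have y'k k : k != i1 -> k != j1 -> y' k = y k by rewrite /y' => /negbTE -> /negbTE ->.
have y'0 k : 0 <= y' k.
  by rewrite /y'; case: ifP => _; [|case: ifP => _]; rewrite ?sqrtr_ge0.
have hA' k : (k \in A) = (y' k != 0).
  case: (eqVneq k i1) => [->|ki]; first by rewrite i1A y'i sqrtr_eq0 -ltNge.
  case: (eqVneq k j1) => [->|kj]; first by rewrite j1A y'j sqrtr_eq0 -ltNge.
  by rewrite y'k.
have hs : y' i1 ^+ 2 + y' j1 ^+ 2 = y i1 ^+ 2 + y j1 ^+ 2.
  rewrite y'i y'j !sqr_sqrtr ?(ltW c0) ?(ltW e0') //; rewrite /e; ring.
have hT' : Tf y' = #|A|%:R * c.
  rewrite -hT /Tf (bigD1 i1) //= (bigD1 j1) /=; last by rewrite eq_sym.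
  rewrite [RHS](bigD1 i1) //= [in RHS](bigD1 j1) /=; last by rewrite eq_sym.
  rewrite !addrA hs; congr (_ + _); apply: eq_bigr => k /andP [ki kj].
  by rewrite y'k.
have hle : Gf y q <= Gf y' q.
  apply: (pair_le q hij y0).
  - by move=> k ki kj; rewrite y'k.
  - exact: hs.
  - by apply: mulr_ge0.
  rewrite y'i y'j -sqrtrM ?(ltW c0) //.
  rewrite -(ger0_norm (mulr_ge0 (y0 i1) (y0 j1))) -sqrtr_sqr ler_sqrt.
    rewrite -subr_ge0.
    have -> : c * e - (y i1 * y j1) ^+ 2 = (c - y i1 ^+ 2) * (y j1 ^+ 2 - c) by rewrite /e; ring.
    by apply: mulr_ge0; rewrite subr_ge0 ltW.
  by apply: mulr_ge0; apply: ltW.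
apply: (le_trans hle); apply: IH => //.
have hsub : [set k in A | y' k ^+ 2 != c] \proper [set k in A | y k ^+ 2 != c].
  apply/properP; split.
    apply/subsetP => k; rewrite !inE => /andP [kA hk]; rewrite kA /=.
    case: (eqVneq k i1) => [ki|ki]; first by move: hk; rewrite ki y'i sqr_sqrtr ?(ltW c0) // eqxx.
    case: (eqVneq k j1) => [->|kj]; first by rewrite gt_eqF.
    by rewrite -y'k.
  exists i1; first by rewrite inE i1A /= lt_eqF.
  by rewrite inE negb_and y'i sqr_sqrtr ?(ltW c0) // eqxx orbT.
by rewrite -ltnS; apply: leq_trans hm; apply: proper_card.
Qed.

End E.



Section F.
Variable R : realType.
Variable n : nat.
Local Notation SP := {ffun 'I_n -> bool}.

Lemma hpoly (A : {set 'I_n}) :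
  \sum_(s : SP) ('X^#|[set k in A | s k]| : {poly R}) =
  (1 + 'X) ^+ #|A| * ((2 ^+ (n - #|A|) : R)%:P).
Proof.
have hprod (s : SP) : ('X^#|[set k in A | s k]| : {poly R}) =
    \prod_k (if (k \in A) && s k then 'X else 1).
  rewrite -big_mkcond /= prodr_const; congr (_ ^+ _).
  by apply: eq_card => k; rewrite inE.
under eq_bigr do rewrite hprod.
rewrite -(bigA_distr_bigA (fun k (b : bool) => if (k \in A) && b then 'X else 1 : {poly R})) /=.
rewrite (bigID (fun k => k \in A)) /=; congr (_ * _).
  rewrite -prodr_const; apply: eq_bigr => k kA; rewrite big_bool /= kA addrC.
  by [].
have -> : (n - #|A|)%N = #|[pred k | k \notin A]|.
  by rewrite -{1}(card_ord n) -(cardC A) addKn.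
rewrite -prodr_const rmorph_prod; apply: eq_bigr => k kA.
rewrite big_bool /= (negbTE kA) /=.
by rewrite rmorphD /= polyC1.
Qed.


Lemma coef_binom K m : ((1 + 'X) ^+ K : {poly R})`_m = 'C(K, m)%:R.
Proof.
rewrite exprDn coef_sum.
under eq_bigr do rewrite coefMn expr1n mul1r coefXn.
case: (ltnP m K.+1) => hm.
  rewrite (bigD1 (Ordinal hm)) //= eqxx big1 ?addr0 //.
  move=> i hi; rewrite (_ : (m == i) = false) ?mul0rn //.
  apply/negbTE; apply: contra hi => /eqP e; apply/eqP/val_inj; by rewrite /= e.
rewrite bin_small // big1 // => i _.
rewrite (_ : (m == i) = false) ?mul0rn //; apply/negbTE.
by rewrite neq_ltn (leq_trans (ltn_ord i) hm) orbT.
Qed.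

Lemma hcoef (A : {set 'I_n}) m :
  \sum_(s : SP) ((#|[set k in A | s k]| == m)%:R : R) =
  'C(#|A|, m)%:R * 2 ^+ (n - #|A|).
Proof.
have := congr1 (fun p : {poly R} => p`_m) (hpoly A).
rewrite /= coef_sum coefMC coef_binom => <-.
by apply: eq_bigr => s _; rewrite coefXn eq_sym.
Qed.

Lemma countN (A : {set 'I_n}) (f : nat -> R) :
  \sum_(s : SP) f #|[set k in A | s k]| =
  2 ^+ (n - #|A|) * \sum_(m < #|A|.+1) 'C(#|A|, m)%:R * f m.
Proof.
transitivity (\sum_(s : SP) \sum_(m < n.+1) (#|[set k in A | s k]| == m)%:R * f m).
  apply: eq_bigr => s _.
  have h : (#|[set k in A | s k]| < n.+1)%N.
    by rewrite ltnS; apply: leq_trans (max_card _) _; rewrite card_ord.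
  rewrite (bigD1 (Ordinal h)) //= eqxx mul1r big1 ?addr0 //.
  move=> i hi; rewrite (_ : (_ == _) = false) ?mul0r //.
  apply/negbTE; apply: contra hi => /eqP e; apply/eqP/val_inj; by rewrite /= e.
rewrite exchange_big /=.
rewrite (eq_bigr (fun j : 'I_n.+1 => 'C(#|A|, j)%:R * 2 ^+ (n - #|A|) * f j)); last by move=> j _; rewrite -mulr_suml hcoef.
rewrite mulr_sumr.
have hK : (#|A|.+1 <= n.+1)%N by rewrite ltnS; apply: leq_trans (max_card _) _; rewrite card_ord.
rewrite (big_ord_widen _ (fun m => 2 ^+ (n - #|A|) * ('C(#|A|, m)%:R * f m)) hK).
rewrite [RHS]big_mkcond /=; apply: eq_bigr => i _.
case: ifP => hi; first by ring.
by rewrite bin_small ?mul0r ?mulr0 // ltnNge -ltnS hi.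
Qed.

End F.



Section G.
Variable R : realType.

Lemma Gf_const (n : nat) (A : {set 'I_n}) (a : R) q :
  Gf (fun k => if k \in A then a else 0) q =
  2 ^+ (n - #|A|) * \sum_(m < #|A|.+1)
     'C(#|A|, m)%:R * (a ^+ 2 * ((2 * m%:R - #|A|%:R) ^+ 2 - #|A|%:R)) ^+ q.
Proof.
rewrite /Gf -(countN _ (fun m : nat => (a ^+ 2 * ((2 * m%:R - #|A|%:R) ^+ 2 - #|A|%:R)) ^+ q)).
apply: eq_bigr => s _; congr (_ ^+ _).
have hZ : Zf (fun k => if k \in A then a else 0) s =
    a * (2 * #|[set k in A | s k]|%:R - #|A|%:R).
  rewrite /Zf.
  have -> : \sum_k (if k \in A then a else 0) * rsign R (s k) =
            \sum_(k in A) a * rsign R (s k).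
    by rewrite [RHS]big_mkcond /=; apply: eq_bigr => k _; case: ifP; rewrite ?mul0r.
  rewrite -mulr_sumr; congr (_ * _).
  have -> : \sum_(k in A) rsign R (s k) = \sum_(k in A) (2 * (s k : nat)%:R - 1).
    by apply: eq_bigr => k _; case: (s k); rewrite /rsign /=; ring.
  rewrite sumrB -mulr_sumr sumr_const -natr_sum; congr (2 * _%:R - _).
  rewrite -sum1_card big_mkcond [RHS]big_mkcond /=; apply: eq_bigr => k _.
  by rewrite inE; case: (k \in A); case: (s k).
have hT : Tf (fun k => if k \in A then a else 0) = #|A|%:R * a ^+ 2.
  rewrite /Tf (eq_bigr (fun k => if k \in A then a ^+ 2 else 0)); last first.
    by move=> k _; case: ifP; rewrite ?expr0n.
  by rewrite -big_mkcond sumr_const mulr_natl.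
rewrite hZ hT; ring.
Qed.

End G.

Unset Implicit Arguments.
Set Strict Implicit.

Theorem theorem3 (R : realType) (n : nat) (x : 'rV[R]_n) (hx : x != 0)
  (q : nat) (hq : (0 < q)%N) :
  Rq x q <= Rq (xstar x) q /\
  Rq (xstar x) q =
    l2norm x ^+ (2 * q) *
    binomE (l0norm x) (fun k => (Bbar R (l0norm x) k ^+ 2 - 1) ^+ q).
Proof.
set A := [set k : 'I_n | x 0 k != 0].
have hK : l0norm x = #|A| by [].
have K0 : (0 < #|A|)%N.
  rewrite lt0n; apply/negP => /eqP /cards0_eq hA0; move/eqP: hx; apply.
  apply/matrixP => i k; rewrite ord1 mxE.
  by have := hA0; move/setP/(_ k); rewrite !inE => /negbFE /eqP.
set K := #|A| in K0 hK *.
have Kr0 : (K%:R : R) != 0 by rewrite pnatr_eq0 -lt0n.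
set T := \sum_(k < n) x 0 k ^+ 2.
have T0 : 0 <= T by apply: sumr_ge0 => k _; apply: sqr_ge0.
have hl2 : l2norm x ^+ 2 = T by rewrite /l2norm sqr_sqrtr.
set c := T / K%:R.
set S := \sum_(m < K.+1) 'C(K, m)%:R * (c * ((2 * m%:R - K%:R) ^+ 2 - K%:R)) ^+ q.
have hRstar : Rq (xstar x) q = (2 ^+ K)^-1 * S.
  rewrite Rq_G /xstar hK.
  rewrite (@Gf_ext _ _ _ (fun k => if k \in [set: 'I_K] then l2norm x / Num.sqrt K%:R else 0)); last first.
    by move=> k; rewrite mxE in_setT.
  rewrite Gf_const cardsT card_ord subnn expr0 mul1r /S; congr (_ * _).
  apply: eq_bigr => m _; congr (_ * (_ * _) ^+ _).
  rewrite expr_div_n hl2 sqr_sqrtr //; exact: ler0n.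
split; last first.
  rewrite hRstar /binomE hK -/K exprM hl2 mulr_sumr mulr_sumr; apply: eq_bigr => m _.
  have -> : c * ((2 * m%:R - K%:R) ^+ 2 - K%:R) = T * (Bbar R K m ^+ 2 - 1).
    rewrite /Bbar /c expr_div_n sqr_sqrtr; last by rewrite divr_ge0 ?ler0n.
    by field; rewrite Kr0.
  by rewrite exprMn; ring.
rewrite hRstar Rq_G Gf_abs.
have y0 k : 0 <= `|x 0 k| by [].
have hA k : (k \in A) = (`|x 0 k| != 0) by rewrite inE normr_eq0.
have hT : Tf (fun k => `|x 0 k|) = K%:R * c.
  rewrite /Tf /c mulrC divfK //; apply: eq_bigr => k _.
  by rewrite real_normK ?num_real.
have := @smooth_ind R n A c q _ K0 (fun k => `|x 0 k|) y0 hA hT (leqnn _).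
rewrite Gf_const => hle.
have hc : Num.sqrt c ^+ 2 = c by rewrite sqr_sqrtr // divr_ge0 ?ler0n.
rewrite hc -/K -/S in hle.
have hKn : (K <= n)%N by rewrite /K; apply: leq_trans (max_card _) _; rewrite card_ord.
have h2 : (2 ^+ n)^-1 * 2 ^+ (n - K) = (2 ^+ K)^-1 :> R.
  rewrite -{1}(subnK hKn) exprD invfM mulrAC mulVf ?mul1r //.
  by rewrite expf_neq0 // pnatr_eq0.
rewrite -h2 -mulrA ler_wpM2l //.
by rewrite invr_ge0 exprn_ge0 // ler0n.
Qed.
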